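(* Every arrow $w\in\mathcal A$ of the groupoid $\mathcal G_N$ can be represented as a reduced word in a unique way. This reduced word is either an empty word (a unit $e_i$) or, for some $d\ge 1$, a product of the form $$w=A_{i_1,i_2}^{(k)}A_{i_2,i_3}^{(-k)}A_{i_3,i_4}^{(k)}\cdots A_{i_d,i_{d+1}}^{((-1)^{d+1}k)}$$ with $k\in\{-1,1\}$ and $i_\ell\neq i_{\ell+1}$ for all $1\le \ell\le d$.
   Context: Fix an integer $N\ge 3$. Let $\mathcal G_N$ be the groupoid with object set $\{1,\dots,N\}$ generated by the arrows $A_{i,j}^{(k)}$, $i\neq j\in\{1,\dots,N\}$, $k\in\{-1,1\}$, where $A_{i,j}^{(k)}$ has source $i$ and target $j$, subject to the relations $A_{i,j}^{(k)}A_{j,\ell}^{(k)}=A_{i,\ell}^{(k)}$ for all $i,j,\ell\in\{1,\dots,N\}$, $k\in\{-1,1\}$, with the convention $A_{i,i}^{(k)}:=e_i$, the unit arrow at object $i$. A composition $fg$ is defined when the target of $f$ equals the source of $g$. Let $\mathcal A$ denote the set of arrows. A word is a composition of finitely many generators $A_{i,j}^{(k)}$ ($i\ne j$); the units $e_i$ are called empty words. A nonempty word is reduced if the generating relations cannot be applied to it so as to reduce the number of generators used; empty words are also considered reduced. Two words represent the same arrow iff one can be transformed into the other by repeated application of the generating relations. *)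

(* Defs.v *)
From mathcomp Require Import all_boot.
From Stdlib Require Import Relations.
Set Implicit Arguments. Unset Strict Implicit. Unset Printing Implicit Defensive.

(* A generator A_{i,j}^{(k)} of G_N is encoded as the triple (i, j, b),
   objects being 'I_N (object m+1 of the paper is the ordinal m), and the
   sign k in {-1,1} encoded by b : bool with  true <-> k = 1,
   false <-> k = -1 (so k -> -k is b -> ~~ b). *)
Definition gen (N : nat) := ('I_N * 'I_N * bool)%type.
Definition gsrc N (g : gen N) : 'I_N := g.1.1.
Definition gtgt N (g : gen N) : 'I_N := g.1.2.
Definition gsgn N (g : gen N) : bool := g.2.

(* A word is given by its source object together with the list of
   generators composed (left to right); the empty list at source i is e_i. *)
Definition word (N : nat) := ('I_N * seq (gen N))%type.

Fixpoint chain N (s : 'I_N) (l : seq (gen N)) : bool :=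
  if l is g :: l' then [&& gsrc g == s, gsrc g != gtgt g & chain (gtgt g) l']
  else true.

Definition wf_word N (w : word N) : bool := chain w.1 w.2.

(* Result of applying the relation A_{i,j}^{(k)} A_{j,l}^{(k)} = A_{i,l}^{(k)}
   (with A_{i,i}^{(k)} = e_i) to the pair (g1, g2). *)
Definition contract N (g1 g2 : gen N) : seq (gen N) :=
  if gsrc g1 == gtgt g2 then [::] else [:: (gsrc g1, gtgt g2, gsgn g1)].

Definition contr_step N (w w' : word N) : Prop :=
  wf_word w /\ wf_word w' /\ w.1 = w'.1 /\
  exists (u v : seq (gen N)) (g1 g2 : gen N),
    [/\ gtgt g1 = gsrc g2, gsgn g1 = gsgn g2,
        w.2 = u ++ [:: g1; g2] ++ v & w'.2 = u ++ contract g1 g2 ++ v].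

Definition rel_step N (w w' : word N) : Prop := contr_step w w' \/ contr_step w' w.

Definition word_equiv N : relation (word N) := clos_refl_sym_trans _ (@rel_step N).

Definition reduced N (w : word N) : Prop :=
  wf_word w /\
  ~ (exists w' : word N, rel_step w w' /\ size w'.2 < size w.2).

(* Main.v *)
Require Import Defs.
From mathcomp Require Import all_boot.
From Stdlib Require Import Relations Lia.
From mathcomp Require Import zify.
Set Implicit Arguments. Unset Strict Implicit. Unset Printing Implicit Defensive.

Section S.
Variable N : nat.
Implicit Types (g h : gen N) (l u v t S : seq (gen N)).

Definition push g S : seq (gen N) :=
  match S with [::] => [:: g]
  | h :: t => if gsgn g == gsgn h then contract g h ++ t else g :: S end.
Definition nf l := foldr push [::] l.

Fixpoint alt l : bool :=
  match l with g :: ((h :: _) as l') => (gsgn g != gsgn h) && alt l' | _ => true end.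

Definition hsgn_ne g S := if S is h :: _ then gsgn g != gsgn h else true.

Lemma alt_cons g S : alt (g :: S) = hsgn_ne g S && alt S.
Proof. by case: S. Qed.

Lemma push_alt g S : alt S -> alt (push g S).
Proof.
case: S => [|h t] //; rewrite alt_cons => /andP[Ht At] /=.
case: ifP => Hs.
  rewrite /contract; case: ifP => _ //; rewrite cat1s alt_cons At andbT.
  by case: t Ht {At} => //= h' t'; rewrite (eqP Hs).
by rewrite alt_cons [alt (h :: t)]alt_cons Ht At /= Hs.
Qed.

Lemma nf_alt l : alt (nf l).
Proof. by elim: l => //= g l IH; apply: push_alt. Qed.

Lemma push_chain g S : chain (gtgt g) S -> gsrc g != gtgt g -> chain (gsrc g) (push g S).
Proof.
case: S => [|[[c d] k] t] /=; first by move=> _ ->; rewrite eqxx.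
move=> /and3P[/eqP Hc Hcd Ht] Hg.
rewrite /gsrc /gtgt /= in Hc Hcd Ht.
case: ifP => _; first last.
  by rewrite /= eqxx Hg /gsrc /gtgt /= Hc eqxx -Hc Hcd Ht.
rewrite /contract /gsrc /gtgt /=; case: eqP => [->|Hne] //=.
by rewrite eqxx /=; apply/andP; split => //; apply/eqP.
Qed.

Lemma nf_chain s l : chain s l -> chain s (nf l).
Proof.
elim: l s => //= g l IH s /and3P[/eqP <- Hg Hl].
by apply: push_chain => //; apply: IH.
Qed.

Lemma nf_id l : alt l -> nf l = l.
Proof.
elim: l => // g l IH; rewrite alt_cons => /andP[H1 H2] /=; rewrite IH //.
by case: l H1 {IH H2} => //= h t /negbTE ->.
Qed.

Lemma push_ne g t : hsgn_ne g t -> push g t = g :: t.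
Proof. by case: t => //= h t /negbTE ->. Qed.

Lemma push_contr g1 g2 S :
  chain (gtgt g2) S -> alt S -> gtgt g1 = gsrc g2 -> gsgn g1 = gsgn g2 ->
  gsrc g1 != gtgt g1 ->
  push g1 (push g2 S) = foldr push S (contract g1 g2).
Proof.
case: g1 g2 => [[a b] k] [[b' c] k'].
rewrite /gtgt /gsrc /gsgn /= => Hch Ha <- <- {b' k'} Hab.
case: S Hch Ha => [|[[c' d] k''] t].
  by move=> _ _ /=; rewrite eqxx /contract /gsrc /gtgt /=; case: ifP.
rewrite alt_cons => /= /and3P[/eqP Hc Hcd Ht] /andP[Hne Hat].
rewrite /gsrc /gtgt /= in Hc Hcd Ht; subst c'.
rewrite /contract /gsrc /gtgt /gsgn /=; case: (eqVneq k k'') => [Hkk|Hkk].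
  subst k''; case: (eqVneq b d) => [Hbd|Hbd] /=.
    subst d; rewrite push_ne; last by case: t Hne {Hat Ht}.
    case: (eqVneq a c) => [Hac|Hac] /=; first by subst c.
    by rewrite /contract /gsrc /gtgt /= eqxx (negbTE Hab).
  rewrite eqxx /contract /gsrc /gtgt /=.
  case: (eqVneq a c) => [Hac|Hac] /=; first by subst c; rewrite (negbTE Hcd).
  by rewrite eqxx /contract /gsrc /gtgt /=.
rewrite /= eqxx /gsrc /gtgt /=.
rewrite /contract /gsrc /gtgt /=.
case: (eqVneq a c) => [Hac|Hac] //=.
by rewrite (negbTE Hkk).
Qed.

Definition endp s u := last s [seq gtgt g | g <- u].

Lemma chain_cat s u x : chain s (u ++ x) = chain s u && chain (endp s u) x.
Proof.
elim: u s => //= g u IH s; rewrite IH /endp /=.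
by rewrite !andbA.
Qed.

Lemma nf_cat u x : nf (u ++ x) = foldr push (nf x) u.
Proof. by rewrite /nf foldr_cat. Qed.

Lemma chain_contract e g1 g2 v :
  chain e (g1 :: g2 :: v) -> chain e (contract g1 g2 ++ v).
Proof.
case: g1 g2 => [[a b] k] [[b' c] k'].
rewrite /= /gsrc /gtgt /= => /and5P[/eqP <- _ /eqP Hb _ Hv].
rewrite /contract /gsrc /gtgt /=; case: eqP => [->|/eqP Hne] //=.
by rewrite eqxx Hne.
Qed.

Lemma contr_nf w w' : contr_step w w' -> w.1 = w'.1 /\ nf w.2 = nf w'.2.
Proof.
move=> [Hw [Hw' [H1 [u [v [g1 [g2 [Ht Hs E1 E2]]]]]]]]; split => //.
move: Hw; rewrite /wf_word E1 E2 !nf_cat chain_cat => /andP[_ Hc].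
congr foldr; rewrite /= -push_contr //.
- by move: Hc => /= /and5P[_ _ _ _ ?]; apply: nf_chain.
- exact: nf_alt.
- by move: Hc => /= /and3P[].
Qed.

Lemma equiv_nf w w' : word_equiv w w' -> w.1 = w'.1 /\ nf w.2 = nf w'.2.
Proof.
elim => [x y [H|H]| x | x y _ [-> ->] | x y z _ [-> ->] _ [-> ->]] //.
- exact: contr_nf.
- by case: (contr_nf H) => -> ->.
Qed.

Lemma nf_rt s l u : chain s (u ++ l) ->
  clos_refl_trans _ (@contr_step N) (s, u ++ l) (s, u ++ nf l).
Proof.
elim: l u => [|g l IH] u Hc; first exact: rt_refl.
apply: rt_trans.
  have -> : u ++ g :: l = rcons u g ++ l by rewrite cat_rcons.
  apply: IH; by rewrite cat_rcons.
rewrite cat_rcons /=.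
move: Hc; rewrite chain_cat => /andP[Hu /= /and3P[/eqP Hsrc Hgg Hl]].
have Hn := nf_chain Hl.
case Enf: (nf l) Hn => [|h t] Hn; first exact: rt_refl.
rewrite /=; case: ifP => Hsg; last exact: rt_refl.
apply: rt_step; split.
  by rewrite /wf_word /= chain_cat Hu /= Hgg Hsrc eqxx /=; exact: Hn.
split.
  rewrite /wf_word /= chain_cat Hu /=.
  by apply: chain_contract; rewrite /= Hgg Hsrc eqxx /=; exact: Hn.
split => //; exists u, t, g, h; split => //.
by move: Hn => /= /and3P[/eqP ->].
exact/eqP.
Qed.

Lemma alt_mid u g1 g2 v : alt (u ++ g1 :: g2 :: v) -> gsgn g1 != gsgn g2.
Proof.
elim: u => [|g u IH]; first by case/andP.
by rewrite cat_cons alt_cons => /andP[_ /IH].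
Qed.

Lemma not_alt l : ~~ alt l -> exists u g1 g2 v, l = u ++ g1 :: g2 :: v /\ gsgn g1 = gsgn g2.
Proof.
elim: l => [|g l IH] //; rewrite alt_cons negb_and => /orP[H|H].
  case: l H {IH} => //= h t /negPn /eqP H.
  by exists [::], g, h, t.
case: (IH H) => u [g1 [g2 [v [-> E]]]].
by exists (g :: u), g1, g2, v.
Qed.

Lemma size_contract g1 g2 : size (contract g1 g2) <= 1.
Proof. by rewrite /contract; case: ifP. Qed.

Lemma alt_reduced r : wf_word r -> alt r.2 -> reduced r.
Proof.
move=> Hw Ha; split => // [[w' [[H|H] Hsz]]].
  case: H => _ [_ [_ [u [v [g1 [g2 [_ Hs E1 _]]]]]]].
  by move: Ha; rewrite E1 => /alt_mid; rewrite Hs eqxx.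
case: H => _ [_ [_ [u [v [g1 [g2 [_ Hs E1 E2]]]]]]].
move: Hsz; rewrite E1 E2 !size_cat /=.
have := size_contract g1 g2; lia.
Qed.

Lemma reduced_alt r : reduced r -> alt r.2.
Proof.
case=> Hw Hn; apply/negPn/negP => /not_alt [u [g1 [g2 [v [E Hs]]]]].
apply: Hn; exists (r.1, u ++ contract g1 g2 ++ v); split; last first.
  rewrite /= E !size_cat /=; have := size_contract g1 g2; lia.
left; split => //; split.
  move: Hw; rewrite /wf_word /= E chain_cat => /andP[Hu H].
  by rewrite chain_cat Hu /=; apply: chain_contract.
split => //; exists u, v, g1, g2; split => //.
move: Hw; rewrite /wf_word E chain_cat => /andP[_ /=] /and4P[_ _ /eqP -> _] //.
Qed.

Lemma shape s ws : chain s ws -> alt ws -> ws != [::] ->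
  exists (d : nat) (k : bool) (i : nat -> 'I_N),
    [/\ 1 <= d, (forall l : nat, l < d -> i l != i l.+1), s = i 0 &
        ws = [seq (i l, i l.+1, k (+) odd l) | l : nat <- iota 0 d]].
Proof.
elim: ws s => [|g ws IH] s //; rewrite alt_cons => /= /and3P[/eqP Hs Hg Hl] /andP[Hne Ha] _.
case El: ws => [|h t].
  exists 1, (gsgn g), (fun n => if n is 0 then s else gtgt g); split => //.
    by case => // _; rewrite -Hs.
  by case: g Hs {Hg Hl Hne} => [[a b] k] /= <-; rewrite addbF.
case: (IH (gtgt g) Hl Ha) => [|d [k [i [Hd Hi Ei E]]]]; first by rewrite El.
exists d.+1, (gsgn g), (fun n => if n is m.+1 then i m else s); split => //.
  by case => [|m] /= Hm; [rewrite -Hs -Ei | apply: Hi].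
rewrite -El E /= addbF.
have Hk : k = ~~ gsgn g.
  move: Hne; rewrite E; case: (d) Hd => // d' _ /=.
  by rewrite addbF; case: (k); case: (gsgn g).
congr cons.
  by case: g Hs Ei {Hg Hl Hne IH El E Hk} => [[a b] k'] /= <- <-.
rewrite (iotaDl 1 0 d) -map_comp; apply: eq_map => n /=.
by rewrite Hk; case: (gsgn g); case: (odd n).
Qed.

Theorem lemma2p1' (HN : 3 <= N) (w : word N) (Hw : wf_word w) :
  exists r : word N,
    [/\ reduced r, word_equiv w r,
        (forall r' : word N, reduced r' -> word_equiv w r' -> r' = r) &
        (r.2 = [::] \/
         exists (d : nat) (k : bool) (i : nat -> 'I_N),
           [/\ 1 <= d, (forall l : nat, l < d -> i l != i l.+1), r.1 = i 0 &
               r.2 = [seq (i l, i l.+1, k (+) odd l) | l : nat <- iota 0 d]])].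
Proof.
case: w Hw => s l Hw.
have Hc : chain s (nf l) by apply: nf_chain.
exists (s, nf l); split.
- by apply: alt_reduced => //; apply: nf_alt.
- have := @nf_rt s l [::] Hw; rewrite /=.
  elim => [x y H|x|x y z _ H1 _ H2].
  + by apply: rst_step; left.
  + exact: rst_refl.
  + exact: rst_trans H1 H2.
- move=> [s' l'] Hr /equiv_nf /= [<- ->].
  by rewrite nf_id //; apply: (reduced_alt Hr).
- case E: (nf l) => [|h t]; [by left | right].
  apply: shape => //; rewrite -E //; exact: nf_alt.
Qed.

End S.

Theorem lemma2p1 (N : nat) (HN : 3 <= N) (w : word N) (Hw : wf_word w) :
  exists r : word N,
    [/\ reduced r, word_equiv w r,
        (forall r' : word N, reduced r' -> word_equiv w r' -> r' = r) &
        (r.2 = [::] \/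
         exists (d : nat) (k : bool) (i : nat -> 'I_N),
           [/\ 1 <= d, (forall l, l < d -> i l != i l.+1), r.1 = i 0 &
               r.2 = [seq (i l, i l.+1, k (+) odd l) | l <- iota 0 d]])].
Proof. exact: lemma2p1'. Qed.
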